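(* Let $\sigma,\rho\in\mathbb{R}$ and $\alpha,\beta,\gamma\in\mathbb{C}$. Define the Laurent polynomials $$\eta^{(2)}(\zeta)=\frac{\sigma}{\zeta}\,\frac{(\zeta-\gamma)(\bar\gamma\zeta+1)}{1+|\gamma|^2},\qquad \eta^{(4)}(\zeta)=\frac{\rho}{\zeta^2}\,\frac{(\zeta-\alpha)(\bar\alpha\zeta+1)}{1+|\alpha|^2}\,\frac{(\zeta-\beta)(\bar\beta\zeta+1)}{1+|\beta|^2},$$ and write their expansions as $\eta^{(2)}(\zeta)=\frac{\bar z_1}{\zeta}+x_1-z_1\zeta$ and $\eta^{(4)}(\zeta)=\frac{\bar z_2}{\zeta^2}+\frac{\bar v_2}{\zeta}+x_2-v_2\zeta+z_2\zeta^2$ (so $x_1,x_2\in\mathbb{R}$, $z_1,z_2,v_2\in\mathbb{C}$). Define $$g_{\sigma^2}=4|z_1|^2+x_1^2,\qquad g_{\rho^2}=4|z_2|^2+|v_2|^2+\tfrac13x_2^2,$$ $$g_{\rho\sigma^2}=\tfrac23x_2(x_1^2-2|z_1|^2)+4z_2\bar z_1^2+4\bar z_2z_1^2+2v_2\bar z_1x_1+2\bar v_2z_1x_1,$$ $$g_{\rho^2\sigma^2}=(8|z_2|^2-|v_2|^2-\tfrac23x_2^2)(x_1^2-2|z_1|^2)-12z_2\bar v_2\bar z_1x_1-12\bar z_2v_2z_1x_1+8z_2x_2\bar z_1^2+8\bar z_2x_2z_1^2-2v_2x_2\bar z_1x_1-2\bar v_2x_2z_1x_1-3v_2^2\bar z_1^2-3\bar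 v_2^2z_1^2.$$ For $a,b\in\mathbb{C}$ let $\delta_{ab}=2\arccos\frac{|1+\bar a b|}{\sqrt{(1+|a|^2)(1+|b|^2)}}$ (the Fubini–Study distance on the Riemann sphere), and set $$Q_\pm^2=(\cos\delta_{\alpha\gamma}\pm\cos\delta_{\beta\gamma})^2,\qquad Q_0^2=\det\begin{pmatrix}1&\cos\delta_{\alpha\gamma}&\cos\delta_{\alpha\beta}\\ \cos\delta_{\alpha\gamma}&1&\cos\delta_{\beta\gamma}\\ \cos\delta_{\alpha\beta}&\cos\delta_{\beta\gamma}&1\end{pmatrix}.$$ Then $$g_{\rho\sigma^2}=\rho\sigma^2\Big(\cos\delta_{\alpha\gamma}\cos\delta_{\beta\gamma}-\tfrac13\cos\delta_{\alpha\beta}\Big),\qquad g_{\rho^2\sigma^2}=g_{\rho^2}g_{\sigma^2}+\tfrac14\rho^2\sigma^2\big(Q_0^2-Q_+^2-Q_-^2\big).$$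
   Context: $\eta^{(2)}$ and $\eta^{(4)}$ are real ${\cal O}(2)$ and ${\cal O}(4)$ multiplets in Majorana (root) form; the quantities $g$ are $SU(2)$-invariants built from their coefficients. *)

(* Defs.v *)
From Stdlib Require Import Reals.
From Coquelicot Require Import Coquelicot.
Open Scope R_scope.

Definition eta2 (sigma : R) (gamma zeta : C) : C :=
  (RtoC sigma / zeta * ((zeta - gamma) * (Cconj gamma * zeta + 1))
     / RtoC (1 + Cmod gamma ^ 2))%C.

Definition eta4 (rho : R) (alpha beta zeta : C) : C :=
  (RtoC rho / (zeta * zeta)
     * (((zeta - alpha) * (Cconj alpha * zeta + 1)) / RtoC (1 + Cmod alpha ^ 2))
     * (((zeta - beta) * (Cconj beta * zeta + 1)) / RtoC (1 + Cmod beta ^ 2)))%C.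

Definition delta (a b : C) : R :=
  2 * acos (Cmod (1 + Cconj a * b)%C / sqrt ((1 + Cmod a ^ 2) * (1 + Cmod b ^ 2))).

Definition det3 (a11 a12 a13 a21 a22 a23 a31 a32 a33 : R) : R :=
  a11 * (a22 * a33 - a23 * a32) - a12 * (a21 * a33 - a23 * a31)
  + a13 * (a21 * a32 - a22 * a31).

Definition Qplus2 (alpha beta gamma : C) : R :=
  (cos (delta alpha gamma) + cos (delta beta gamma)) ^ 2.
Definition Qminus2 (alpha beta gamma : C) : R :=
  (cos (delta alpha gamma) - cos (delta beta gamma)) ^ 2.
Definition Q02 (alpha beta gamma : C) : R :=
  let cag := cos (delta alpha gamma) in
  let cab := cos (delta alpha beta) in
  let cbg := cos (delta beta gamma) in
  det3 1 cag cab  cag 1 cbg  cab cbg 1.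

Definition g_sigma2 (z1 : C) (x1 : R) : R := 4 * Cmod z1 ^ 2 + x1 ^ 2.
Definition g_rho2 (z2 v2 : C) (x2 : R) : R :=
  4 * Cmod z2 ^ 2 + Cmod v2 ^ 2 + / 3 * x2 ^ 2.

Definition g_rhosigma2 (z1 : C) (x1 : R) (z2 v2 : C) (x2 : R) : C :=
  (RtoC (2 / 3 * x2 * (x1 ^ 2 - 2 * Cmod z1 ^ 2))
   + 4 * z2 * (Cconj z1 * Cconj z1) + 4 * Cconj z2 * (z1 * z1)
   + 2 * v2 * Cconj z1 * RtoC x1 + 2 * Cconj v2 * z1 * RtoC x1)%C.

Definition g_rho2sigma2 (z1 : C) (x1 : R) (z2 v2 : C) (x2 : R) : C :=
  (RtoC ((8 * Cmod z2 ^ 2 - Cmod v2 ^ 2 - 2 / 3 * x2 ^ 2) * (x1 ^ 2 - 2 * Cmod z1 ^ 2))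
   - 12 * z2 * Cconj v2 * Cconj z1 * RtoC x1
   - 12 * Cconj z2 * v2 * z1 * RtoC x1
   + 8 * z2 * RtoC x2 * (Cconj z1 * Cconj z1)
   + 8 * Cconj z2 * RtoC x2 * (z1 * z1)
   - 2 * v2 * RtoC x2 * Cconj z1 * RtoC x1
   - 2 * Cconj v2 * RtoC x2 * z1 * RtoC x1
   - 3 * (v2 * v2) * (Cconj z1 * Cconj z1)
   - 3 * (Cconj v2 * Cconj v2) * (z1 * z1))%C.

(* Main.v *)
From Stdlib Require Import Reals Lra.
From Stdlib Require Import Psatz.
From Coquelicot Require Import Coquelicot.
Require Import Defs.
Open Scope R_scope.
Lemma Cmod2 (z:C) : Cmod z ^ 2 = fst z ^ 2 + snd z ^ 2.
Proof. unfold Cmod. rewrite pow2_sqrt; [auto| nra]. Qed.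

Lemma cosdelta (a1 a2 b1 b2 : R) :
  cos (delta (a1,a2) (b1,b2)) =
  2*((1+a1*b1+a2*b2)^2+(a1*b2-a2*b1)^2)/((1+(a1^2+a2^2))*(1+(b1^2+b2^2))) - 1.
Proof.
unfold delta. rewrite cos_2a_cos.
rewrite !Cmod2. unfold Cmod. simpl fst; simpl snd.
set (M := (1 + (a1 * b1 - - a2 * b2)) ^ 2 + (0 + (a1 * b2 + - a2 * b1)) ^ 2).
set (P := (1 + (a1 ^ 2 + a2 ^ 2)) * (1 + (b1 ^ 2 + b2 ^ 2))).
assert (HP : 0 < P) by (unfold P; nra).
assert (HM : 0 <= M) by (unfold M; apply Rplus_le_le_0_compat; apply pow2_ge_0).
assert (HMP : M <= P).
{ assert (P - M = (a1-b1)^2 + (a2-b2)^2) by (unfold P, M; ring). pose proof (pow2_ge_0 (a1-b1)). pose proof (pow2_ge_0 (a2-b2)). lra. }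
rewrite <- sqrt_div_alt by lra.
assert (H01: 0 <= M / P <= 1).
{ split. unfold Rdiv; apply Rmult_le_pos; [lra| left; apply Rinv_0_lt_compat; lra].
  apply Rmult_le_reg_r with P; [lra|]. unfold Rdiv; rewrite Rmult_assoc, Rinv_l; lra. }
assert (0 <= sqrt (M/P) <= 1).
{ split. apply sqrt_pos. rewrite <- sqrt_1. apply sqrt_le_1_alt. lra. }
rewrite cos_acos by lra.
rewrite Rmult_assoc, sqrt_sqrt by lra.
unfold M, P. field. nra.
Qed.

Lemma RtoC_nz (x : R) : x <> 0 -> RtoC x <> 0%C.
Proof. intros H E. apply (f_equal fst) in E. simpl in E. auto. Qed.

Lemma poly2 (c0 c1 c2 : C) :
  (forall z : C, z <> 0%C -> (c0 + c1 * z + c2 * (z*z) = 0)%C) ->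
  c0 = 0%C /\ c1 = 0%C /\ c2 = 0%C.
Proof.
intros H.
assert (E1 := H (RtoC 1) (RtoC_nz 1 ltac:(lra))).
assert (E2 := H (RtoC (-1)) (RtoC_nz (-1) ltac:(lra))).
assert (E3 := H Ci ltac:(intro E; apply (f_equal snd) in E; simpl in E; lra)).
destruct c0 as [p0 q0], c1 as [p1 q1], c2 as [p2 q2].
unfold Cplus, Cmult, RtoC, Ci in *; simpl in *.
apply pair_equal_spec in E1, E2, E3.
repeat split; apply injective_projections; simpl; lra.
Qed.

Lemma poly4 (c0 c1 c2 c3 c4 : C) :
  (forall z : C, z <> 0%C -> (c0 + c1 * z + c2 * (z*z) + c3 * (z*z*z) + c4 * (z*z*(z*z)) = 0)%C) ->
  c0 = 0%C /\ c1 = 0%C /\ c2 = 0%C /\ c3 = 0%C /\ c4 = 0%C.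
Proof.
intros H.
assert (E1 := H (RtoC 1) (RtoC_nz 1 ltac:(lra))).
assert (E2 := H (RtoC (-1)) (RtoC_nz (-1) ltac:(lra))).
assert (E5 := H (RtoC 2) (RtoC_nz 2 ltac:(lra))).
assert (E3 := H Ci ltac:(intro E; apply (f_equal snd) in E; simpl in E; lra)).
assert (E4 := H (-Ci)%C ltac:(intro E; apply (f_equal snd) in E; simpl in E; lra)).
destruct c0 as [p0 q0], c1 as [p1 q1], c2 as [p2 q2], c3 as [p3 q3], c4 as [p4 q4].
unfold Cplus, Cmult, RtoC, Ci, Copp in *; simpl in *.
apply pair_equal_spec in E1, E2, E3, E4, E5.
repeat split; apply injective_projections; simpl; lra.
Qed.

Lemma big (s r a1 a2 b1 b2 g1 g2 : R) :
  let A := a1^2+a2^2 in let B := b1^2+b2^2 in let G := g1^2+g2^2 in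
  let Na := 1 + A in let Nb := 1+B in let Ng := 1+G in
  forall (z1 z2 v2 : C) (x1 x2 : R),
  z1 = (-s*g1/Ng, s*g2/Ng) -> x1 = s*(1-G)/Ng ->
  z2 = (r*(a1*b1-a2*b2)/(Na*Nb), -r*(a1*b2+a2*b1)/(Na*Nb)) ->
  v2 = (-r*(a1*(1-B)+b1*(1-A))/(Na*Nb), r*(a2*(1-B)+b2*(1-A))/(Na*Nb)) ->
  x2 = r*((1-A)*(1-B) - 2*(a1*b1+a2*b2))/(Na*Nb) ->
  let cag := 2*((1+a1*g1+a2*g2)^2+(a1*g2-a2*g1)^2)/(Na*Ng) - 1 in
  let cbg := 2*((1+b1*g1+b2*g2)^2+(b1*g2-b2*g1)^2)/(Nb*Ng) - 1 in
  let cab := 2*((1+a1*b1+a2*b2)^2+(a1*b2-a2*b1)^2)/(Na*Nb) - 1 in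
  g_rhosigma2 z1 x1 z2 v2 x2 =
    RtoC (r * s ^ 2 * (cag * cbg - / 3 * cab))
  /\
  g_rho2sigma2 z1 x1 z2 v2 x2 =
    RtoC (g_rho2 z2 v2 x2 * g_sigma2 z1 x1
          + / 4 * r ^ 2 * s ^ 2
            * (det3 1 cag cab  cag 1 cbg  cab cbg 1 - (cag+cbg)^2 - (cag-cbg)^2)).
Proof.
intros A B G Na Nb Ng z1 z2 v2 x1 x2 Ez1 Ex1 Ez2 Ev2 Ex2 cag cbg cab. subst z1 x1 z2 v2 x2.
assert (HA: 1 + (a1^2+a2^2) <> 0) by nra.
assert (HB: 1 + (b1^2+b2^2) <> 0) by nra.
assert (HG: 1 + (g1^2+g2^2) <> 0) by nra.
unfold g_rhosigma2, g_rho2sigma2, g_rho2, g_sigma2, det3.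
rewrite !Cmod2.
unfold cag, cbg, cab. unfold Na, Nb, Ng, A, B, G.
split; apply injective_projections; simpl;
 field; repeat split; nra.
Qed.

Ltac nzC := repeat split; try (apply RtoC_nz); try assumption;
  try (match goal with |- context [Cmod ?z] => pose proof (pow2_ge_0 (Cmod z)) end; lra);
  try (apply Rgt_not_eq; apply Rlt_gt; nra).

Theorem mainTheorem1 (sigma rho : R) (alpha beta gamma : C)
  (x1 x2 : R) (z1 z2 v2 : C)
  (H2 : forall zeta : C, zeta <> 0%C ->
     eta2 sigma gamma zeta = (Cconj z1 / zeta + RtoC x1 - z1 * zeta)%C)
  (H4 : forall zeta : C, zeta <> 0%C ->
     eta4 rho alpha beta zeta =
       (Cconj z2 / (zeta * zeta) + Cconj v2 / zeta + RtoC x2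
        - v2 * zeta + z2 * (zeta * zeta))%C) :
  g_rhosigma2 z1 x1 z2 v2 x2 =
    RtoC (rho * sigma ^ 2 * (cos (delta alpha gamma) * cos (delta beta gamma)
                             - / 3 * cos (delta alpha beta)))
  /\
  g_rho2sigma2 z1 x1 z2 v2 x2 =
    RtoC (g_rho2 z2 v2 x2 * g_sigma2 z1 x1
          + / 4 * rho ^ 2 * sigma ^ 2
            * (Q02 alpha beta gamma - Qplus2 alpha beta gamma - Qminus2 alpha beta gamma)).
Proof.
set (K := (RtoC sigma / RtoC (1 + Cmod gamma ^ 2))%C).
assert (P2 : forall z : C, z <> 0%C ->
  ((- K * gamma - Cconj z1) + (K * (1 - gamma * Cconj gamma) - RtoC x1) * z
   + (K * Cconj gamma + z1) * (z * z) = 0)%C).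
{ intros z Hz. transitivity (z * (eta2 sigma gamma z - (Cconj z1 / z + RtoC x1 - z1 * z)))%C.
  - unfold eta2, K. field. nzC.
  - rewrite H2 by exact Hz. ring. }
destruct (poly2 _ _ _ P2) as [_ [Hc1 Hc2]]. clear P2.
set (L := (RtoC rho / (RtoC (1 + Cmod alpha ^ 2) * RtoC (1 + Cmod beta ^ 2)))%C).
assert (P4 : forall z : C, z <> 0%C ->
  ((L * alpha * beta - Cconj z2)
   + (L * (- alpha * (1 - beta * Cconj beta) - beta * (1 - alpha * Cconj alpha)) - Cconj v2) * z
   + (L * (- Cconj alpha * beta - alpha * Cconj beta + (1 - alpha * Cconj alpha) * (1 - beta * Cconj beta)) - RtoC x2) * (z * z)
   + (L * (Cconj alpha * (1 - beta * Cconj beta) + Cconj beta * (1 - alpha * Cconj alpha)) + v2) * (z * z * z)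
   + (L * Cconj alpha * Cconj beta - z2) * (z * z * (z * z)) = 0)%C).
{ intros z Hz. transitivity (z * z * (eta4 rho alpha beta z - (Cconj z2 / (z * z) + Cconj v2 / z + RtoC x2
        - v2 * z + z2 * (z * z))))%C.
  - unfold eta4, L. field. nzC.
  - rewrite H4 by exact Hz. ring. }
destruct (poly4 _ _ _ _ _ P4) as [_ [_ [Hd2 [Hd3 Hd4]]]]. clear P4.
assert (Ez1 : z1 = ((K * Cconj gamma + z1) - K * Cconj gamma)%C) by ring.
rewrite Hc2 in Ez1.
assert (Ex1 : RtoC x1 = (K * (1 - gamma * Cconj gamma) - (K * (1 - gamma * Cconj gamma) - RtoC x1))%C) by ring.
rewrite Hc1 in Ex1.
assert (Ez2 : z2 = (L * Cconj alpha * Cconj beta - (L * Cconj alpha * Cconj beta - z2))%C) by ring.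
rewrite Hd4 in Ez2.
assert (Ev2 : v2 = ((L * (Cconj alpha * (1 - beta * Cconj beta) + Cconj beta * (1 - alpha * Cconj alpha)) + v2) - (L * (Cconj alpha * (1 - beta * Cconj beta) + Cconj beta * (1 - alpha * Cconj alpha))))%C) by ring.
rewrite Hd3 in Ev2.
assert (Ex2 : RtoC x2 = ((L * (- Cconj alpha * beta - alpha * Cconj beta + (1 - alpha * Cconj alpha) * (1 - beta * Cconj beta))) - (L * (- Cconj alpha * beta - alpha * Cconj beta + (1 - alpha * Cconj alpha) * (1 - beta * Cconj beta)) - RtoC x2))%C) by ring.
rewrite Hd2 in Ex2.
clear Hc1 Hc2 Hd2 Hd3 Hd4 H2 H4.
apply (f_equal fst) in Ex1. apply (f_equal fst) in Ex2.
unfold K, L in *. clear K L.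
destruct alpha as [a1 a2], beta as [b1 b2], gamma as [g1 g2].
rewrite !Cmod2 in *. simpl fst in *. simpl snd in *.
unfold Q02, Qplus2, Qminus2. cbv zeta.
rewrite !cosdelta.
apply big.
- rewrite Ez1. apply injective_projections; simpl; field; nzC.
- simpl in Ex1. rewrite Ex1. field; nzC.
- rewrite Ez2. apply injective_projections; simpl; field; nzC.
- rewrite Ev2. apply injective_projections; simpl; field; nzC.
- simpl in Ex2. rewrite Ex2. field; nzC.
Qed.
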